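(* Let $\mathcal{A}\in\hat{\mathcal{T}}_7$ with $c_{15}^7=c_{25}^7=0$. Then $\mathcal{A}$ is isomorphic to a unique algebra structure $\mathcal{A}'\in\hat{\mathcal{T}}_7$ whose structure constants $d_{ij}^k$ satisfy $d_{15}^7=d_{25}^7=0$ and $d_{46}^7=1$.
   Context: Over $\mathbb{C}$, basis $e_1,\dots,e_7$, $e_ie_j=\sum_kc_{ij}^ke_k$. $\hat{\mathcal{T}}_7$ is the family of anticommutative algebra structures with $c_{ij}^k=0$ whenever $k\le\max\{i,j\}$, $e_ie_{i+1}=e_{i+2}$ for $1\le i\le5$, $c_{13}^4=c_{14}^5=c_{15}^6=c_{24}^5=c_{25}^6=c_{14}^6=c_{24}^6=c_{13}^6=0$, $c_{35}^6=1$ and $c_{13}^5c_{46}^7\ne0$, other constants arbitrary subject to anticommutativity. *)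

(* Defs.v *)
From mathcomp Require Import all_boot all_algebra.
From mathcomp Require Import reals Rstruct complex.
Import GRing.Theory Num.Theory.
Local Open Scope ring_scope.

Notation Cplx := (Rdefinitions.R)[i].

(* Structure constants of a 7-dimensional algebra on the basis e_1..e_7.
   Indices are ordinals 'I_7, where ordinal m stands for basis vector e_(m+1):
   e_i e_j = \sum_k c_ij^k e_k. *)
Definition sconst := 'I_7 -> 'I_7 -> 'I_7 -> Cplx.

Definition cf (c : sconst) (i j k : nat) : Cplx :=
  c (inord i.-1) (inord j.-1) (inord k.-1).

Definition amul (c : sconst) (x y : 'rV[Cplx]_7) : 'rV[Cplx]_7 :=
  \row_k \sum_(i < 7) \sum_(j < 7) x 0 i * y 0 j * c i j k.

Definition alg_iso (c d : sconst) : Prop :=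
  exists P : 'M[Cplx]_7, P \in unitmx /\
    forall x y : 'rV[Cplx]_7, amul c x y *m P = amul d (x *m P) (y *m P).

Definition in_T7hat (c : sconst) : Prop :=
  (forall i k : 'I_7, c i i k = 0) /\
  (forall i j k : 'I_7, c i j k = - c j i k) /\
  (forall i j k : 'I_7, (k <= maxn i j)%N -> c i j k = 0) /\
  (forall i k : nat, (1 <= i <= 5)%N -> (1 <= k <= 7)%N ->
     cf c i i.+1 k = (k == i.+2)%:R) /\
  cf c 1 3 4 = 0 /\ cf c 1 4 5 = 0 /\ cf c 1 5 6 = 0 /\ cf c 2 4 5 = 0 /\
  cf c 2 5 6 = 0 /\ cf c 1 4 6 = 0 /\ cf c 2 4 6 = 0 /\ cf c 1 3 6 = 0 /\
  cf c 3 5 6 = 1 /\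
  cf c 1 3 5 * cf c 4 6 7 != 0.

(* Main.v *)
Require Import Defs.
From mathcomp Require Import all_boot all_algebra.
From mathcomp Require Import reals Rstruct complex.
From mathcomp Require Import ring zify.
Import GRing.Theory Num.Theory.
Local Open Scope ring_scope.

Notation "'O' n" := (@Ordinal 7 n isT) (at level 0, n at level 0).

Lemma sum7 (F : 'I_7 -> Cplx) : \sum_(i < 7) F i =
  F (O 0) + F (O 1) + F (O 2) + F (O 3) + F (O 4) + F (O 5) + F (O 6).
Proof.
rewrite !big_ord_recl big_ord0 addr0 !addrA.
by do !congr (_ + _); congr F; apply: val_inj.
Qed.

Lemma EQ (c d : sconst) (P : 'M[Cplx]_7) :
  (forall x y : 'rV[Cplx]_7, amul c x y *m P = amul d (x *m P) (y *m P)) ->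
  forall i j k : 'I_7, \sum_(l < 7) c i j l * P l k =
     \sum_(a < 7) \sum_(b < 7) P i a * P j b * d a b k.
Proof.
move=> H i j k.
have := congr1 (fun M : 'rV_7 => M 0 k) (H (delta_mx 0 i) (delta_mx 0 j)).
rewrite -!rowE /amul /= !mxE.
under [in RHS]eq_bigr do under eq_bigr do rewrite !mxE.
move=> <-.
apply: eq_bigr => l _; rewrite mxE; congr (_ * _).
rewrite (bigD1 i) //= [X in _ + X]big1 ?addr0; last first.
  by move=> a ai; rewrite big1 // => b _; rewrite mxE (negbTE ai) andbF mul0r mul0r.
rewrite (bigD1 j) //= [X in _ + X]big1 ?addr0; last first.
  by move=> b bj; rewrite !mxE (negbTE bj) andbF mulr0 mul0r.
by rewrite !mxE !eqxx /= !mul1r.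
Qed.

Definition mkn (a135 a137 a147 a157 a167 a247 a257 a267 a357 a367 a467 : Cplx)
  (i j k : nat) : Cplx :=
  match i, j, k with
  | 0,1,2 => 1 | 1,0,2 => -1
  | 1,2,3 => 1 | 2,1,3 => -1
  | 2,3,4 => 1 | 3,2,4 => -1
  | 3,4,5 => 1 | 4,3,5 => -1
  | 4,5,6 => 1 | 5,4,6 => -1
  | 2,4,5 => 1 | 4,2,5 => -1
  | 0,2,4 => a135 | 2,0,4 => - a135
  | 0,2,6 => a137 | 2,0,6 => - a137
  | 0,3,6 => a147 | 3,0,6 => - a147
  | 0,4,6 => a157 | 4,0,6 => - a157
  | 0,5,6 => a167 | 5,0,6 => - a167
  | 1,3,6 => a247 | 3,1,6 => - a247
  | 1,4,6 => a257 | 4,1,6 => - a257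
  | 1,5,6 => a267 | 5,1,6 => - a267
  | 2,4,6 => a357 | 4,2,6 => - a357
  | 2,5,6 => a367 | 5,2,6 => - a367
  | 3,5,6 => a467 | 5,3,6 => - a467
  | _,_,_ => 0
  end.

Definition mk a135 a137 a147 a157 a167 a247 a257 a267 a357 a367 a467 : sconst :=
  fun i j k => mkn a135 a137 a147 a157 a167 a247 a257 a267 a357 a367 a467 i j k.

Definition simpC := (mul0r, mulr0, add0r, addr0, mul1r, mulr1, mulN1r, mulrN1, oppr0, subr0, sub0r).


Lemma lc (k x y L R : Cplx) : L = R -> x - y = k * (L - R) -> x = y.
Proof. by move=> -> /eqP; rewrite subrr mulr0 subr_eq0 => /eqP. Qed.
Arguments lc k {x y L R}.

Ltac zs M := repeat match goal with
  | H : fun_of_matrix M _ _ = ?z |- _ =>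
      match z with
      | @GRing.zero _ => progress rewrite H
      | @GRing.one _ => progress rewrite H end end.

Ltac ex E M i j k := have := E i j k; rewrite !sum7 /mk /=; zs M.

Ltac fin := let H := fresh "H" in move=> H;
  first [ by apply: (lc 1 H); ring | by apply: (lc (-1) H); ring ].

Lemma core (a135 a137 a147 a167 a247 a267 a357 a367
            b135 b137 b147 b167 b247 b267 b357 b367 : Cplx) (P : 'M[Cplx]_7) :
  a135 != 0 -> b135 != 0 -> P \in unitmx ->
  (forall x y : 'rV[Cplx]_7,
     amul (mk a135 a137 a147 0 a167 a247 0 a267 a357 a367 1) x y *m P =
     amul (mk b135 b137 b147 0 b167 b247 0 b267 b357 b367 1) (x *m P) (y *m P)) ->
  [/\ a135 = b135, a137 = b137, a147 = b147, a167 = b167 &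
      [/\ a247 = b247, a267 = b267, a357 = b357 & a367 = b367]].
Proof.
move=> na nb Pu /EQ E.
have z20 : P (O 2) (O 0) = 0 by ex E P (O 0) (O 1) (O 0); fin.
have z21 : P (O 2) (O 1) = 0 by ex E P (O 0) (O 1) (O 1); fin.
have z30 : P (O 3) (O 0) = 0 by ex E P (O 1) (O 2) (O 0); fin.
have z31 : P (O 3) (O 1) = 0 by ex E P (O 1) (O 2) (O 1); fin.
have z32 : P (O 3) (O 2) = 0 by ex E P (O 1) (O 2) (O 2); fin.
have z40 : P (O 4) (O 0) = 0 by ex E P (O 2) (O 3) (O 0); fin.
have z41 : P (O 4) (O 1) = 0 by ex E P (O 2) (O 3) (O 1); fin.
have z42 : P (O 4) (O 2) = 0 by ex E P (O 2) (O 3) (O 2); fin.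
have z43 : P (O 4) (O 3) = 0 by ex E P (O 2) (O 3) (O 3); fin.
have z50 : P (O 5) (O 0) = 0 by ex E P (O 3) (O 4) (O 0); fin.
have z51 : P (O 5) (O 1) = 0 by ex E P (O 3) (O 4) (O 1); fin.
have z52 : P (O 5) (O 2) = 0 by ex E P (O 3) (O 4) (O 2); fin.
have z53 : P (O 5) (O 3) = 0 by ex E P (O 3) (O 4) (O 3); fin.
have z54 : P (O 5) (O 4) = 0 by ex E P (O 3) (O 4) (O 4); fin.
have z60 : P (O 6) (O 0) = 0 by ex E P (O 4) (O 5) (O 0); fin.
have z61 : P (O 6) (O 1) = 0 by ex E P (O 4) (O 5) (O 1); fin.
have z62 : P (O 6) (O 2) = 0 by ex E P (O 4) (O 5) (O 2); fin.
have z63 : P (O 6) (O 3) = 0 by ex E P (O 4) (O 5) (O 3); fin.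
have z64 : P (O 6) (O 4) = 0 by ex E P (O 4) (O 5) (O 4); fin.
have z65 : P (O 6) (O 5) = 0 by ex E P (O 4) (O 5) (O 5); fin.
have nz66 : P (O 6) (O 6) != 0.
  have := congr1 (fun M : 'M[Cplx]_7 => M (O 6) (O 6)) (mulmxV Pu).
  rewrite !mxE !sum7 /= ?eqxx; zs P => H.
  apply/eqP => h; move: H; rewrite h => H.
  have : (1 : Cplx) = 0 by apply: (lc (-1) H); ring.
  by move/eqP; rewrite oner_eq0.
have d22 : P (O 2) (O 2) = P (O 0) (O 0) * P (O 1) (O 1) - P (O 0) (O 1) * P (O 1) (O 0) by ex E P (O 0) (O 1) (O 2); fin.
have d33 : P (O 3) (O 3) = P (O 1) (O 1) * P (O 2) (O 2) by ex E P (O 1) (O 2) (O 3); fin.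
have d44 : P (O 4) (O 4) = P (O 2) (O 2) * P (O 3) (O 3) by ex E P (O 2) (O 3) (O 4); fin.
have d55 : P (O 5) (O 5) = P (O 3) (O 3) * P (O 4) (O 4) by ex E P (O 3) (O 4) (O 5); fin.
have d66 : P (O 6) (O 6) = P (O 4) (O 4) * P (O 5) (O 5) by ex E P (O 4) (O 5) (O 6); fin.
have : P (O 4) (O 4) * P (O 5) (O 5) != 0 by rewrite -d66.
rewrite mulf_eq0 negb_or => /andP [nz44 nz55].
have : P (O 2) (O 2) * P (O 3) (O 3) != 0 by rewrite -d44.
rewrite mulf_eq0 negb_or => /andP [nz22 nz33].
have : P (O 1) (O 1) * P (O 2) (O 2) != 0 by rewrite -d33.
rewrite mulf_eq0 negb_or => /andP [nz11 _].
have z01 : P (O 0) (O 1) = 0.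
  have e : P (O 0) (O 1) * P (O 2) (O 2) = 0 by ex E P (O 0) (O 2) (O 3); fin.
  by move/eqP: e; rewrite mulf_eq0 (negbTE nz22) orbF => /eqP.
have : P (O 0) (O 0) * P (O 1) (O 1) != 0 by move: nz22; rewrite d22 z01 mul0r subr0.
rewrite mulf_eq0 negb_or => /andP [nz00 _].
have z02 : P (O 0) (O 2) = 0.
  have e : P (O 0) (O 2) * P (O 3) (O 3) = 0 by ex E P (O 0) (O 3) (O 4); fin.
  by move/eqP: e; rewrite mulf_eq0 (negbTE nz33) orbF => /eqP.
have z12 : P (O 1) (O 2) = 0.
  have e : P (O 1) (O 2) * P (O 3) (O 3) = 0 by ex E P (O 1) (O 3) (O 4); fin.
  by move/eqP: e; rewrite mulf_eq0 (negbTE nz33) orbF => /eqP.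
have z23 : P (O 2) (O 3) = 0 by ex E P (O 0) (O 1) (O 3); fin.
have o11 : P (O 1) (O 1) = 1.
  have e : P (O 5) (O 5) = P (O 2) (O 2) * P (O 4) (O 4) by ex E P (O 2) (O 4) (O 5); fin.
  have : P (O 3) (O 3) * P (O 4) (O 4) = P (O 2) (O 2) * P (O 4) (O 4) by rewrite -d55.
  move/(mulIf nz44); rewrite d33 -{2}[P (O 2) (O 2)]mul1r.
  exact: (mulIf nz22).
have z03 : P (O 0) (O 3) = 0.
  have e : P (O 0) (O 3) * P (O 4) (O 4) = 0 by ex E P (O 0) (O 4) (O 5); fin.
  by move/eqP: e; rewrite mulf_eq0 (negbTE nz44) orbF => /eqP.
have z13 : P (O 1) (O 3) = 0.
  have e : P (O 1) (O 3) * P (O 4) (O 4) = 0 by ex E P (O 1) (O 4) (O 5); fin.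
  by move/eqP: e; rewrite mulf_eq0 (negbTE nz44) orbF => /eqP.
have z04 : P (O 0) (O 4) = 0.
  have e : P (O 0) (O 4) * P (O 3) (O 3) = 0 by ex E P (O 0) (O 3) (O 5); fin.
  by move/eqP: e; rewrite mulf_eq0 (negbTE nz33) orbF => /eqP.
have z14 : P (O 1) (O 4) = 0.
  have e : P (O 1) (O 4) * P (O 3) (O 3) = 0 by ex E P (O 1) (O 3) (O 5); fin.
  by move/eqP: e; rewrite mulf_eq0 (negbTE nz33) orbF => /eqP.
have z24 : P (O 2) (O 4) = 0 by ex E P (O 0) (O 1) (O 4); fin.
have e34 : P (O 3) (O 4) = b135 * P (O 1) (O 0) * P (O 2) (O 2) by ex E P (O 1) (O 2) (O 4); fin.
have e45 : P (O 4) (O 5) = P (O 2) (O 2) * P (O 3) (O 4) by ex E P (O 2) (O 3) (O 5); fin.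
have z45 : P (O 4) (O 5) = 0.
  have e : a135 * P (O 4) (O 5) = 0 by ex E P (O 0) (O 2) (O 5); fin.
  by move/eqP: e; rewrite mulf_eq0 (negbTE na) /= => /eqP.
have z34 : P (O 3) (O 4) = 0.
  by move/eqP: e45; rewrite z45 eq_sym mulf_eq0 (negbTE nz22) /= => /eqP.
have z10 : P (O 1) (O 0) = 0.
  by move/eqP: e34; rewrite z34 eq_sym !mulf_eq0 (negbTE nz22) (negbTE nb) /= orbF => /eqP.
have z05 : P (O 0) (O 5) = 0.
  have e : P (O 0) (O 5) * P (O 4) (O 4) = 0 by ex E P (O 0) (O 4) (O 6); fin.
  by move/eqP: e; rewrite mulf_eq0 (negbTE nz44) orbF => /eqP.
have z15 : P (O 1) (O 5) = 0.
  have e : P (O 1) (O 5) * P (O 4) (O 4) = 0 by ex E P (O 1) (O 4) (O 6); fin.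
  by move/eqP: e; rewrite mulf_eq0 (negbTE nz44) orbF => /eqP.
have o22 : P (O 2) (O 2) = 1.
  have e : P (O 6) (O 6) = P (O 3) (O 3) * P (O 5) (O 5) by ex E P (O 3) (O 5) (O 6); fin.
  have : P (O 4) (O 4) * P (O 5) (O 5) = P (O 3) (O 3) * P (O 5) (O 5) by rewrite -d66.
  move/(mulIf nz55); rewrite d44 -{2}[P (O 3) (O 3)]mul1r.
  exact: (mulIf nz33).
have o00 : P (O 0) (O 0) = 1.
  by move: d22; rewrite o22 o11 z01 mul0r subr0 mulr1.
have o33 : P (O 3) (O 3) = 1 by rewrite d33 o11 o22 mulr1.
have o44 : P (O 4) (O 4) = 1 by rewrite d44 o22 o33 mulr1.
have o55 : P (O 5) (O 5) = 1 by rewrite d55 o33 o44 mulr1.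
have o66 : P (O 6) (O 6) = 1 by rewrite d66 o44 o55 mulr1.
have z25 : P (O 2) (O 5) = 0 by ex E P (O 0) (O 1) (O 5); fin.
have z26 : P (O 2) (O 6) = 0 by ex E P (O 0) (O 1) (O 6); fin.
have z35 : P (O 3) (O 5) = 0 by ex E P (O 1) (O 2) (O 5); fin.
have z36 : P (O 3) (O 6) = 0 by ex E P (O 1) (O 2) (O 6); fin.
have z46 : P (O 4) (O 6) = 0 by ex E P (O 2) (O 3) (O 6); fin.
have z56 : P (O 5) (O 6) = 0 by ex E P (O 3) (O 4) (O 6); fin.
have f135 : a135 = b135 by ex E P (O 0) (O 2) (O 4); fin.
have f137 : a137 = b137 by ex E P (O 0) (O 2) (O 6); fin.
have f147 : a147 = b147 by ex E P (O 0) (O 3) (O 6); fin.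
have f167 : a167 = b167 by ex E P (O 0) (O 5) (O 6); fin.
have f247 : a247 = b247 by ex E P (O 1) (O 3) (O 6); fin.
have f267 : a267 = b267 by ex E P (O 1) (O 5) (O 6); fin.
have f357 : a357 = b357 by ex E P (O 2) (O 4) (O 6); fin.
have f367 : a367 = b367 by ex E P (O 2) (O 5) (O 6); fin.
by split => //; split.
Qed.


Lemma cfval (c : sconst) (i j k : 'I_7) :
  c i j k = cf c (val i).+1 (val j).+1 (val k).+1.
Proof. by rewrite /cf /= !inord_val. Qed.

Definition pars (c : sconst) :=
  mk (cf c 1 3 5) (cf c 1 3 7) (cf c 1 4 7) (cf c 1 5 7) (cf c 1 6 7)
     (cf c 2 4 7) (cf c 2 5 7) (cf c 2 6 7) (cf c 3 5 7) (cf c 3 6 7) (cf c 4 6 7).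

Lemma fam_mk (c : sconst) : in_T7hat c -> forall i j k, c i j k = pars c i j k.
Proof.
move=> [H0 [Ha [Ho [Hf [h134 [h145 [h156 [h245 [h256 [h146 [h246 [h136 [h356 _]]]]]]]]]]]]].
have H0' : forall n k, (n < 7)%N -> (k < 7)%N -> cf c n.+1 n.+1 k.+1 = 0.
  by move=> n k _ _; rewrite /cf /= H0.
have Ha' : forall n m k, (n < 7)%N -> (m < 7)%N -> (k < 7)%N ->
    cf c n.+1 m.+1 k.+1 = - cf c m.+1 n.+1 k.+1.
  by move=> n m k _ _ _; rewrite /cf /= Ha.
have Ho' : forall n m k, (n < 7)%N -> (m < 7)%N -> (k < 7)%N -> (k <= maxn n m)%N ->
    cf c n.+1 m.+1 k.+1 = 0.
  by move=> n m k hn hm hk hle; rewrite /cf /= Ho // !inordK.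
move=> i j k; rewrite cfval /pars /mk.
case: i j k => i Hi [j Hj] [k Hk] /=.
do 7?[case: i Hi => [|i] Hi]; do 7?[case: j Hj => [|j] Hj]; do 7?[case: k Hk => [|k] Hk];
  rewrite /mkn /=;
  first [ by []
        | by apply: H0'
        | by apply: Ho'
        | by rewrite Hf
        | by rewrite ?(h134, h145, h156, h245, h256, h146, h246, h136, h356)
        | by rewrite Ha' // ?Hf ?(h134, h145, h156, h245, h256, h146, h246, h136, h356) ?oppr0 ].
Qed.

Lemma amul_ext (c c' : sconst) : (forall i j k, c i j k = c' i j k) ->
  forall x y, amul c x y = amul c' x y.
Proof.
move=> H x y; apply/rowP => k; rewrite !mxE.
by apply: eq_bigr => i _; apply: eq_bigr => j _; rewrite H.
Qed.

Lemma iso_ext (c c' d d' : sconst) :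
  (forall i j k, c i j k = c' i j k) -> (forall i j k, d i j k = d' i j k) ->
  alg_iso c d -> alg_iso c' d'.
Proof.
move=> Hc Hd [P [Pu HP]]; exists P; split => // x y.
by rewrite -(amul_ext _ _ Hc) -(amul_ext _ _ Hd).
Qed.

Lemma iso_sym (c d : sconst) : alg_iso c d -> alg_iso d c.
Proof.
move=> [P [Pu HP]]; exists (invmx P); split; first by rewrite unitmx_inv.
move=> x y; have := HP (x *m invmx P) (y *m invmx P).
rewrite !mulmxKV // => <-.
by rewrite mulmxK.
Qed.

Lemma iso_trans (c d e : sconst) : alg_iso c d -> alg_iso d e -> alg_iso c e.
Proof.
move=> [P [Pu HP]] [Q [Qu HQ]]; exists (P *m Q); split; first by rewrite unitmx_mul Pu.
by move=> x y; rewrite mulmxA HP HQ !mulmxA.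
Qed.

Definition sn (a : Cplx) (n : nat) : Cplx :=
  match n with 0 => a | 1 => 1 | 2 => a | 3 => a | 4 => a ^+ 2 | 5 => a ^+ 3 | _ => a ^+ 5 end.

Definition sc (c : sconst) (a : Cplx) : sconst :=
  fun i j k => c i j k * sn a k / (sn a i * sn a j).

Lemma sn_neq0 a n : a != 0 -> sn a n != 0.
Proof.
by move=> a0; case: n => [|[|[|[|[|[|n]]]]]] //=; rewrite ?oner_eq0 ?expf_neq0.
Qed.

Lemma cfsc c a i j k : (0 < i <= 7)%N -> (0 < j <= 7)%N -> (0 < k <= 7)%N ->
  cf (sc c a) i j k = cf c i j k * sn a k.-1 / (sn a i.-1 * sn a j.-1).
Proof.
case: i => [|i] //; case: j => [|j] //; case: k => [|k] //= hi hj hk.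
by rewrite /cf /sc /= !inordK.
Qed.

Lemma exist_d (c : sconst) : in_T7hat c -> cf c 1 5 7 = 0 -> cf c 2 5 7 = 0 ->
  (in_T7hat (sc c (cf c 4 6 7)^-1) /\ cf (sc c (cf c 4 6 7)^-1) 1 5 7 = 0 /\
   cf (sc c (cf c 4 6 7)^-1) 2 5 7 = 0 /\ cf (sc c (cf c 4 6 7)^-1) 4 6 7 = 1) /\
  alg_iso c (sc c (cf c 4 6 7)^-1).
Proof.
move=> Hc h157 h257.
have Hc' := Hc.
move: Hc' => [H0 [Ha [Ho [Hf [h134 [h145 [h156 [h245 [h256 [h146 [h246 [h136 [h356 hnz]]]]]]]]]]]]].
move: hnz; rewrite mulf_eq0 negb_or => /andP [n135 n467].
set a := (cf c 4 6 7)^-1.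
have a0 : a != 0 by rewrite invr_eq0.
split; last first.
  exists (diag_mx (\row_i sn a i)); split.
    rewrite unitmxE det_diag unitfE; apply/prodf_neq0 => i _.
    by rewrite mxE sn_neq0.
  move=> x y; rewrite !mul_mx_diag; apply/rowP => k; rewrite !mxE big_distrl /=.
  apply: eq_bigr => i _; rewrite big_distrl /=; apply: eq_bigr => j _.
  rewrite !mxE /sc.
  have := @sn_neq0 a i a0; have := @sn_neq0 a j a0; have := @sn_neq0 a k a0.
  move=> nk nj ni; field.
  by rewrite nj ni.
split; last first.
  rewrite !cfsc // h157 h257 !mul0r; split => //; split => //.
  rewrite /= /a; field.
  by [].
split.
  by move=> i k; rewrite /sc H0 !mul0r.
split.
  by move=> i j k; rewrite /sc Ha (mulrC (sn a i)) mulNr mulNr.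
split.
  by move=> i j k hle; rewrite /sc Ho // !mul0r.
split.
  move=> i k hi hk.
  have b1 : (0 < i <= 7)%N by move: hi; clear; lia.
  have b2 : (0 < i.+1 <= 7)%N by move: hi; clear; lia.
  rewrite cfsc // Hf //.
  case: eqP => [->|_]; last by rewrite !mul0r.
  case/andP: hi => h1 h2.
  case: i h1 h2 {b1 b2 hk} => [|[|[|[|[|[|i]]]]]] //= _ _; field; by rewrite ?a0 ?expf_neq0.
rewrite !cfsc // h134 h145 h156 h245 h256 h146 h246 h136 h356 !mul0r.
do 8 (split => //).
split.
  rewrite /= ; field; by rewrite ?a0 ?expf_neq0.
rewrite /= mulf_neq0 //.
  by rewrite !mulf_neq0 // ?invr_eq0 ?mulf_neq0 // ?expf_neq0.
by rewrite !mulf_neq0 // ?invr_eq0 ?mulf_neq0 // ?expf_neq0.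
Qed.

Theorem mainTheorem19 (c : sconst) :
  in_T7hat c -> cf c 1 5 7 = 0 -> cf c 2 5 7 = 0 ->
  exists d : sconst,
    (in_T7hat d /\ cf d 1 5 7 = 0 /\ cf d 2 5 7 = 0 /\ cf d 4 6 7 = 1) /\
    alg_iso c d /\
    (forall d' : sconst,
       in_T7hat d' -> cf d' 1 5 7 = 0 -> cf d' 2 5 7 = 0 -> cf d' 4 6 7 = 1 ->
       alg_iso c d' -> forall i j k : 'I_7, d' i j k = d i j k).
Proof.
move=> Hc h157 h257.
have [[Hd [d157 [d257 d467]]] Icd] := exist_d _ Hc h157 h257.
move: (sc c _) Hd d157 d257 d467 Icd => d Hd d157 d257 d467 Icd.
exists d; split; first by [].
split; first by [].
move=> d' Hd' e157 e257 e467 Icd' i j k.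
have Idd' : alg_iso d d' := @iso_trans _ _ _ (@iso_sym _ _ Icd) Icd'.
have Ip : alg_iso (pars d) (pars d') := @iso_ext _ _ _ _ (fam_mk _ Hd) (fam_mk _ Hd') Idd'.
move: Ip; rewrite /pars d157 d257 d467 e157 e257 e467 => -[P [Pu HP]].
have nz (e : sconst) : in_T7hat e -> cf e 1 3 5 != 0.
  move=> [_ [_ [_ [_ [_ [_ [_ [_ [_ [_ [_ [_ [_ hnz]]]]]]]]]]]]].
  by move: hnz; rewrite mulf_eq0 negb_or => /andP [].
have [f1 f2 f3 f4 [f5 f6 f7 f8]] := @core _ _ _ _ _ _ _ _ _ _ _ _ _ _ _ _ P (nz _ Hd) (nz _ Hd') Pu HP.
rewrite (fam_mk _ Hd') (fam_mk _ Hd) /pars d157 d257 d467 e157 e257 e467.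
by rewrite f1 f2 f3 f4 f5 f6 f7 f8.
Qed.
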